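(* Let $G$ be a virtually abelian group and let $H\le G$ be a finite-index normal subgroup with $H\cong\mathbb{Z}^n$. Then there exists a finite generating set $S$ of $G$ (with $S=S^{-1}$, $e\notin S$) such that $\kappa(h)=0$ for every $h\in H\smallsetminus\{e\}$, where $\kappa$ is computed with respect to $S$.
   Context: For a group $G$ with finite generating set $S$ ($S=S^{-1}$, $e\notin S$), $|x|$ denotes the word length of $x\in G$ with respect to $S$. For $g\in G$ define $\mathrm{Av}(g)=\frac{1}{|S|}\sum_{a\in S}|a^{-1}ga|$, and for $g\neq e$ define the curvature $\kappa(g)=\frac{|g|-\mathrm{Av}(g)}{|g|}$. *)

(* Defs.v *)
From HB Require Import structures.
From mathcomp Require Import all_boot all_order all_algebra.
From mathcomp Require Import boolp.
From Stdlib Require List.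
Set Implicit Arguments. Unset Strict Implicit. Unset Printing Implicit Defensive.
Import Order.TTheory GRing.Theory Num.Theory.

Record group := Group {
  gcar :> Type;
  gmul : gcar -> gcar -> gcar;
  ginv : gcar -> gcar;
  gone : gcar;
  gmulA : forall x y z, gmul x (gmul y z) = gmul (gmul x y) z;
  gmul1 : forall x, gmul gone x = x;
  gmulV : forall x, gmul (ginv x) x = gone
}.

Section Defs.
Variable G : group.

Definition gprod (l : seq G) : G := foldr (@gmul G) (gone G) l.

Definition has_word (S : seq G) (x : G) (n : nat) : Prop :=
  exists l : seq G, [/\ List.Forall (fun a => List.In a S) l, size l = n & gprod l = x].

(* S is a finite generating set with S = S^-1 and e notin S
   (finite: S is a duplicate-free list) *)
Definition sym_gen_set (S : seq G) : Prop :=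
  [/\ List.NoDup S,
      ~ List.In (gone G) S,
      (forall a, List.In a S -> List.In (ginv a) S) &
      (forall x : G, exists n, has_word S x n)].

Definition wordlen (S : seq G) (x : G) : nat :=
  match pselect (exists n, `[< has_word S x n >]) with
  | left e => ex_minn e
  | right _ => 0%N
  end.

Local Open Scope ring_scope.

Definition Av (S : seq G) (g : G) : rat :=
  (\sum_(a <- S) (wordlen S (gmul (gmul (ginv a) g) a))%:R) / (size S)%:R.

Definition kappa (S : seq G) (g : G) : rat :=
  ((wordlen S g)%:R - Av S g) / (wordlen S g)%:R.

Definition subgroup (H : G -> Prop) : Prop :=
  [/\ H (gone G), (forall x y, H x -> H y -> H (gmul x y)) & (forall x, H x -> H (ginv x))].

Definition normal (H : G -> Prop) : Prop :=
  forall g h, H h -> H (gmul (gmul (ginv g) h) g).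

Definition finite_index (H : G -> Prop) : Prop :=
  exists reps : seq G, forall x : G, exists2 r, List.In r reps & H (gmul (ginv r) x).

Definition iso_Zn (H : G -> Prop) (n : nat) : Prop :=
  exists phi : 'rV[int]_n -> G,
    [/\ injective phi,
        (forall u v, phi (u + v) = gmul (phi u) (phi v)),
        (forall u, H (phi u)) &
        (forall h, H h -> exists u, phi u = h)].

End Defs.

(* Main.v *)
Require Import Defs.
From HB Require Import structures.
From mathcomp Require Import all_boot all_order all_algebra.
From mathcomp Require Import boolp.
From Stdlib Require List.
Import Order.TTheory GRing.Theory Num.Theory.
Set Implicit Arguments. Unset Strict Implicit. Unset Printing Implicit Defensive.

Section GroupLemmas.
Variable G : group.
Local Notation "x ** y" := (@gmul G x y) (at level 40, left associativity).
Local Notation e := (gone G).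
Local Notation iv := (@ginv G).

Lemma gmulxV (x : G) : x ** iv x = e.
Proof.
have h1 : iv (iv x) ** iv x = e by apply: gmulV.
by rewrite -[x ** iv x]gmul1 -h1 -gmulA (gmulA (iv x)) gmulV gmul1.
Qed.

Lemma gmulx1 (x : G) : x ** e = x.
Proof. by rewrite -(gmulV x) gmulA gmulxV gmul1. Qed.

Lemma gmulK (x y z : G) : x ** y = x ** z -> y = z.
Proof. by move=> h; rewrite -(gmul1 y) -(gmul1 z) -(gmulV x) -!gmulA h. Qed.

Lemma ginvK (x : G) : iv (iv x) = x.
Proof. by apply: (@gmulK (iv x)); rewrite gmulxV gmulV. Qed.

Lemma ginvM (x y : G) : iv (x ** y) = iv y ** iv x.
Proof.
apply: (@gmulK (x ** y)); rewrite gmulxV gmulA -(gmulA x) gmulxV gmulx1 gmulxV //.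
Qed.

Lemma ginv1 : iv e = e.
Proof. by rewrite -{2}(gmulV e) gmulx1. Qed.

Lemma ginv_eq1 (x : G) : iv x = e -> x = e.
Proof. by move=> h; rewrite -(ginvK x) h ginv1. Qed.

Lemma gprod_cat (l1 l2 : seq G) : gprod (l1 ++ l2) = gprod l1 ** gprod l2.
Proof. elim: l1 => [|a l IH] /=; first by rewrite gmul1. by rewrite /gprod /= -/(gprod _) IH gmulA. Qed.

Definition cj (a x : G) := iv a ** x ** a.

Lemma cjM a b x : cj (a ** b) x = cj b (cj a x).
Proof. by rewrite /cj ginvM !gmulA. Qed.

Lemma cjC a x : x ** a = a ** x -> cj a x = x.
Proof. by move=> h; rewrite /cj -gmulA h gmulA gmulV gmul1. Qed.

Lemma cjK a x : cj (iv a) (cj a x) = x.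
Proof. by rewrite -cjM gmulxV /cj ginv1 gmul1 gmulx1. Qed.

End GroupLemmas.

Lemma nodup_exists (T : Type) (l : list T) (P : T -> Prop) :
  exists l', List.NoDup l' /\ forall x, List.In x l' <-> (List.In x l /\ P x).
Proof.
elim: l => [|a l [l' [nd hl']]].
  by exists nil; split; [constructor | move=> x; split => //= [[]]].
case: (pselect (P a /\ ~ List.In a l')) => [[pa na]|nh].
  exists (a :: l'); split; first by constructor.
  move=> x /=; split.
    by case=> [<-|/hl' [? ?]]; tauto.
  by case=> [[<-|xl] px]; [left | right; apply/hl'].
exists l'; split => // x; split.
  by move/hl' => [? ?]; split => //; right.
case=> [[<-|xl] px]; last by apply/hl'.
by case: (pselect (List.In a l')) => // nx; exfalso; apply: nh.
Qed.

Lemma In_nth_find (T : Type) (x0 : T) (a : pred T) (s : seq T) :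
  has a s -> List.In (nth x0 s (find a s)) s.
Proof. elim: s => [|b s IH] //=; case: (a b) => /= [_|h]; [by left | by right; apply: IH]. Qed.

Lemma has_In (T : Type) (a : pred T) (s : seq T) x : List.In x s -> a x -> has a s.
Proof. elim: s => [|b s IH] //= [<- ->//|xs ax]; by rewrite IH ?orbT. Qed.

Lemma In_enum (T : finType) (x : T) : List.In x (enum T).
Proof.
have : x \in enum T by rewrite mem_enum.
elim: (enum T) => [|b s IH] //=; rewrite in_cons => /orP [/eqP ->|/IH]; by [left|right].
Qed.

Section Main.
Variable G : group.
Local Notation "x ** y" := (@gmul G x y) (at level 40, left associativity).
Local Notation e := (gone G).
Local Notation iv := (@ginv G).
Variable H : G -> Prop.
Variable n : nat.
Variable R : seq G.
Variable phi : 'rV[int]_n -> G.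
Hypothesis H1 : H e.
Hypothesis HM : forall x y, H x -> H y -> H (x ** y).
Hypothesis HV : forall x, H x -> H (iv x).
Hypothesis Hn : forall g h, H h -> H (iv g ** h ** g).
Hypothesis HR : forall x : G, exists2 r, List.In r R & H (iv r ** x).
Hypothesis phiM : forall u v, phi (u + v)%R = phi u ** phi v.
Hypothesis phiH : forall u, H (phi u).
Hypothesis phiS : forall h, H h -> exists u, phi u = h.

Lemma Hab x y : H x -> H y -> x ** y = y ** x.
Proof.
move=> /phiS [u <-] /phiS [v <-]; by rewrite -!phiM addrC.
Qed.

Lemma Hn' g h : H h -> H (g ** h ** iv g).
Proof. by move=> hh; have := Hn (iv g) hh; rewrite ginvK. Qed.

Definition rho (x : G) : G := nth e R (find (fun r => `[< H (iv r ** x) >]) R).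

Lemma rho_has x : has (fun r => `[< H (iv r ** x) >]) R.
Proof. by have [r rR hr] := HR x; apply: (has_In rR); apply/asboolP. Qed.

Lemma rho_in x : List.In (rho x) R.
Proof. exact: In_nth_find (rho_has x). Qed.

Lemma rho_H x : H (iv (rho x) ** x).
Proof. exact/asboolP/(nth_find e (rho_has x)). Qed.

Lemma rho_coset x y : H (iv x ** y) -> rho x = rho y.
Proof.
move=> hxy; rewrite /rho; congr nth; apply: eq_find => r.
apply/asboolP/asboolP => h.
  by have := HM h hxy; rewrite -!gmulA (gmulA x) gmulxV gmul1.
have := HM h (HV hxy); rewrite ginvM ginvK -!gmulA (gmulA y) gmulxV gmul1 //.
Qed.


Definition Olist : list G := List.app R (List.map iv R).
Definition Lvec : list 'rV[int]_n :=
  List.flat_map (fun i => [:: delta_mx 0 i; - delta_mx 0 i]%R) (enum 'I_n).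
Definition Wl : list G :=
  List.app (List.flat_map (fun r => List.flat_map (fun s =>
     List.map (fun r' => r ** s ** iv r') R) Olist) R) (List.map phi Lvec).
Definition Cl : list G :=
  List.filter (fun x => `[< H x >]) (List.flat_map (fun r => List.map (fun y => iv r ** y ** r) Wl) R).
Definition Spre : list G := List.app Cl Olist.

Lemma Cl_H x : List.In x Cl -> H x.
Proof. by move/List.filter_In => [_ /asboolP]. Qed.

Lemma Cl_intro r y : List.In r R -> List.In y Wl -> H (iv r ** y ** r) -> List.In (iv r ** y ** r) Cl.
Proof.
move=> rR yW hx; apply/List.filter_In; split; last exact/asboolP.
apply/List.in_flat_map; exists r; split => //; apply/List.in_map_iff; by exists y.
Qed.

Lemma Cl_conj x g : List.In x Cl -> List.In (iv g ** x ** g) Cl.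
Proof.
move=> xC; have hx := Cl_H xC.
move: xC => /List.filter_In [/List.in_flat_map [r [rR /List.in_map_iff [y [xy yW]]]] _].
have hy : H y by have := Hn' r hx; rewrite -xy -!gmulA gmulxV gmulx1 !gmulA gmulxV gmul1.
set r' := rho (r ** g).
have hk := rho_H (r ** g); rewrite -/r' in hk.
set k := iv r' ** (r ** g) in hk.
have rg : r ** g = r' ** k by rewrite /k gmulA gmulxV gmul1.
have hz : H (iv r' ** y ** r') by apply: Hn.
have -> : iv g ** x ** g = iv r' ** y ** r'.
  rewrite -[_ ** _ ** g]/(cj g x) -xy -[_ ** _ ** r]/(cj r y) -cjM rg cjM cjC //.
  exact: Hab.
by apply: Cl_intro => //; apply: rho_in.
Qed.


Lemma rho_e_H : H (rho e).
Proof. by have := HV (rho_H e); rewrite gmulx1 ginvK. Qed.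

Lemma Wl_H_Cl t : List.In t Wl -> H t -> List.In t Cl.
Proof.
move=> tW ht; have -> : t = iv (rho e) ** t ** rho e.
  by rewrite -[RHS]/(cj _ _) cjC //; apply: Hab => //; apply: rho_e_H.
by apply: Cl_intro => //; [apply: rho_in | rewrite -[_ ** _ ** _]/(cj _ _) cjC //; apply: Hab => //; apply: rho_e_H].
Qed.

Variable S : list G.
Hypothesis HS : forall x, List.In x S <-> List.In x Spre /\ x <> e.

Lemma letter s y : List.In s S ->
  let t := rho y ** s ** iv (rho (y ** s)) in t = e \/ List.In t S.
Proof.
move=> /HS [/List.in_app_iff [sC|sO] sne] t.
  have hs := Cl_H sC.
  have rr : rho (y ** s) = rho y by symmetry; apply: rho_coset; rewrite gmulA gmulV gmul1.
  have tc : t = cj (iv (rho y)) s by rewrite /t rr /cj ginvK.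
  right; apply/HS; split; first by apply/List.in_app_iff; left; rewrite tc; apply: Cl_conj.
  by move=> te; apply: sne; rewrite -(cjK (iv (rho y)) s) -tc te /cj gmulx1 gmulV.
have tW : List.In t Wl.
  apply/List.in_app_iff; left; apply/List.in_flat_map; exists (rho y); split; first exact: rho_in.
  apply/List.in_flat_map; exists s; split => //; apply/List.in_map_iff; exists (rho (y ** s)).
  by split => //; apply: rho_in.
have ht : H t.
  have h1 : H (rho y ** iv y).
    have := Hn' (rho y) (HV (rho_H y)); rewrite ginvM ginvK.
    by rewrite -!gmulA gmulxV gmulx1.
  have h2 : H (y ** s ** iv (rho (y ** s))).
    have := Hn' (rho (y ** s)) (rho_H (y ** s)).
    by rewrite (gmulA (rho _)) gmulxV gmul1.
  have := HM h1 h2; by rewrite /t -!gmulA (gmulA (iv y)) gmulV gmul1.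
case: (pselect (t = e)) => [|tne]; [by left | right].
apply/HS; split => //; apply/List.in_app_iff; left; exact: Wl_H_Cl.
Qed.

Lemma tele w : (forall s, List.In s w -> List.In s S) -> forall y, exists v,
  [/\ (forall t, List.In t v -> List.In t S), (size v <= size w)%N &
     gprod v = rho y ** gprod w ** iv (rho (y ** gprod w))].
Proof.
elim: w => [|s w IH] hw y.
  by exists nil; split => //=; rewrite /gprod /= !gmulx1 gmulxV.
have [v [hv sv pv]] := IH (fun a aw => hw a (or_intror aw)) (y ** s).
have hp : rho y ** gprod (s :: w) ** iv (rho (y ** gprod (s :: w)))
   = (rho y ** s ** iv (rho (y ** s))) ** gprod v.
  rewrite pv /gprod /= -/(gprod w) -!gmulA; congr (_ ** (_ ** _)).
  by rewrite (gmulA (iv (rho (y ** s)))) gmulV gmul1 gmulA.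
case: (letter y (hw s (or_introl erefl))) => [te|tS].
  exists v; split => //; first by apply: leqW.
  by rewrite hp te gmul1 .
exists (rho y ** s ** iv (rho (y ** s)) :: v); split => //.
by move=> t /= [<-|tv]; [exact: tS | exact: hv].
Qed.


Definition gen (x : G) := exists l : seq G, (forall a, List.In a l -> List.In a S) /\ gprod l = x.

Lemma gen_e : gen e.
Proof. by exists nil. Qed.

Lemma gen_mul x y : gen x -> gen y -> gen (x ** y).
Proof.
move=> [l1 [h1 p1]] [l2 [h2 p2]]; exists (l1 ++ l2); split; last by rewrite gprod_cat p1 p2.
by move=> a /List.in_app_iff [] ?; [apply: h1 | apply: h2].
Qed.

Lemma gen_letter a : List.In a Spre -> gen a.
Proof.
move=> aS; case: (pselect (a = e)) => [->|ne]; first exact: gen_e.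
exists [:: a]; split; last by rewrite /gprod /= gmulx1.
by move=> b /= [<-|[]]; apply/HS.
Qed.

Lemma phi0 : phi 0%R = e.
Proof.
have h := phiM 0%R 0%R; rewrite addr0 in h.
by symmetry; apply: (@gmulK _ (phi 0%R)); rewrite gmulx1 -h.
Qed.

Lemma phiN v : phi (- v)%R = iv (phi v).
Proof.
by rewrite -[LHS]gmulx1 -(gmulxV (phi v)) gmulA -phiM addNr phi0 gmul1.
Qed.

Lemma Lvec_gen v : List.In v Lvec -> gen (phi v).
Proof.
move=> vL; apply: gen_letter; apply/List.in_app_iff; left; apply: Wl_H_Cl => //.
by apply/List.in_app_iff; right; apply/List.in_map_iff; exists v.
Qed.

Lemma gen_phi u : gen (phi u).
Proof.
rewrite [u]row_sum_delta.
apply: (big_ind (fun v => gen (phi v))); first by rewrite phi0; exact: gen_e.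
  by move=> a b ga gb; rewrite phiM; apply: gen_mul.
move=> j _.
have hd : List.In (delta_mx 0 j)%R Lvec.
  by apply/List.in_flat_map; exists j; split; [apply: In_enum | left].
have hnd : List.In (- delta_mx 0 j)%R Lvec.
  by apply/List.in_flat_map; exists j; split; [apply: In_enum | right; left].
have hm : forall d, List.In d Lvec -> forall m, gen (phi (d *+ m)%R).
  move=> d dL; elim=> [|m IH]; first by rewrite mulr0n phi0; exact: gen_e.
  by rewrite mulrS phiM; apply: gen_mul => //; apply: Lvec_gen.
case: (u 0%R j) => m.
  by rewrite -natz scaler_nat; apply: hm.
by rewrite NegzE scaleNr -natz scaler_nat -mulNrn; apply: hm.
Qed.

Lemma gen_all x : gen x.
Proof.
have -> : x = rho x ** (iv (rho x) ** x) by rewrite gmulA gmulxV gmul1.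
apply: gen_mul.
  by apply: gen_letter; apply/List.in_app_iff; right; apply/List.in_app_iff; left; apply: rho_in.
have [u <-] := phiS (rho_H x); exact: gen_phi.
Qed.

Lemma gen_has_word x : exists k, has_word S x k.
Proof.
have [l [hl pl]] := gen_all x; exists (size l), l; split => //.
exact/List.Forall_forall.
Qed.

Lemma wl_le x k : has_word S x k -> (wordlen S x <= k)%N.
Proof.
move=> hk; rewrite /wordlen; case: pselect => [ex|nex]; last by [].
by case: ex_minnP => m _; apply; apply/asboolP.
Qed.

Lemma wl_has x : has_word S x (wordlen S x).
Proof.
rewrite /wordlen; case: pselect => [ex|nex].
  by case: ex_minnP => m /asboolP.
exfalso; apply: nex; have [k hk] := gen_has_word x; exists k; exact/asboolP.
Qed.

Lemma wl_conj_le g h : H h -> (wordlen S (cj g h) <= wordlen S h)%N.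
Proof.
move=> hh; have [l [hl sl pl]] := wl_has h.
have [v [hv sv pv]] := tele (w:=l) (fun s => (proj1 (List.Forall_forall _ _) hl) s) (iv g).
apply: (@leq_trans (size v)); last by rewrite -sl.
apply: wl_le; exists v; split => //; first exact/List.Forall_forall.
rewrite pv pl.
have rr : rho (iv g ** h) = rho (iv g) by symmetry; apply: rho_coset; rewrite gmulA gmulV gmul1.
rewrite rr.
set a := rho (iv g).
have hk : H (iv a ** iv g) := rho_H (iv g).
have gg : g = iv (iv a ** iv g) ** iv a by rewrite ginvM !ginvK -gmulA gmulxV gmulx1.
rewrite [in RHS]gg cjM (cjC (x:=h)); last by apply: Hab => //; apply: HV.
by rewrite /cj ginvK.
Qed.

Lemma wl_conj g h : H h -> wordlen S (cj g h) = wordlen S h.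
Proof.
move=> hh; apply/eqP; rewrite eqn_leq wl_conj_le //=.
have := wl_conj_le (iv g) (Hn g hh); by rewrite cjK.
Qed.


Lemma Olist_inv a : List.In a Olist -> List.In (iv a) Olist.
Proof.
move=> /List.in_app_iff [aR|/List.in_map_iff [r [<- rR]]]; apply/List.in_app_iff.
  by right; apply/List.in_map_iff; exists a.
by left; rewrite ginvK.
Qed.

Lemma Wl_inv y : List.In y Wl -> List.In (iv y) Wl.
Proof.
move=> /List.in_app_iff [/List.in_flat_map [r1 [r1R /List.in_flat_map [s [sO /List.in_map_iff [r2 [<- r2R]]]]]]|/List.in_map_iff [v [<- vL]]]; apply/List.in_app_iff.
  left; apply/List.in_flat_map; exists r2; split => //; apply/List.in_flat_map; exists (iv s); split; first exact: Olist_inv.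
  by apply/List.in_map_iff; exists r1; split => //; rewrite !ginvM !ginvK gmulA.
right; apply/List.in_map_iff; exists (- v)%R; split; first by rewrite phiN.
move: vL => /List.in_flat_map [j [jE [<-|[<-|[]]]]]; apply/List.in_flat_map; exists j; split => //.
  by right; left.
by left; rewrite opprK.
Qed.

Lemma Spre_inv a : List.In a Spre -> List.In (iv a) Spre.
Proof.
move=> /List.in_app_iff [aC|aO]; apply/List.in_app_iff; last by right; apply: Olist_inv.
left; have ha := Cl_H aC.
move: aC => /List.filter_In [/List.in_flat_map [r [rR /List.in_map_iff [y [ay yW]]]] _]; subst a.
have e1 : iv (iv r ** y ** r) = iv r ** iv y ** r by rewrite !ginvM ginvK gmulA.
rewrite e1; apply: Cl_intro => //; first exact: Wl_inv.
by rewrite -e1; apply: HV.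
Qed.

Lemma sum_const_seq (T : Type) (s : seq T) (c : rat) : (\sum_(a <- s) c)%R = (c *+ size s)%R.
Proof. by elim: s => [|b s IH]; rewrite ?big_nil ?big_cons ?IH ?mulrS. Qed.

End Main.

Theorem mainTheorem2 (G : group) (H : G -> Prop) (n : nat) :
  subgroup H -> normal H -> finite_index H -> iso_Zn H n ->
  exists S : seq G, sym_gen_set S /\
    (forall h : G, H h -> h <> gone G -> kappa S h = 0%R).
Proof.
move=> [H1 HM HV] Hn [R HR] [phi [inj phiM phiH phiS]].
have [S [nd HS]] := nodup_exists (Spre H R phi) (fun x => x <> gone G).
exists S; split.
  split => //.
  - by move/HS => [_ []].
  - move=> a /HS [aS ane]; apply/HS; split.
      by apply: Spre_inv.
    by move/ginv_eq1.
  - by move=> x; apply: (gen_has_word (H:=H) (R:=R) (phi:=phi)).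
move=> h hh hne.
have wc : forall g h0, H h0 -> wordlen S (cj g h0) = wordlen S h0.
  by move=> g h0 hh0; apply: (wl_conj (H:=H) (R:=R) (phi:=phi)).
rewrite /kappa /Av.
under eq_bigr => a _ do rewrite -[gmul (gmul _ h) a]/(cj a h) (wc a h hh).
rewrite sum_const_seq.
have sz : size S != 0%N.
  apply/eqP => s0; apply: hne.
  have [l [hl pl]] : gen S h by apply: (gen_all (H:=H) (R:=R) (phi:=phi)).
  move: hl; rewrite -pl; case: l {pl} => [|a l] //= hl.
  by move: (hl a (or_introl erefl)); rewrite (size0nil s0).
by rewrite -(mulr_natr ((wordlen S h)%:R : rat) (size S)) mulfK ?pnatr_eq0 // subrr mul0r.
Qed.
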